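(* Let $\mathcal{X}=\mathcal{Y}=\mathcal{A}=\mathcal{B}=\{0,1\}$ and $\kappa\in[0,1)$. Then $$\max_{p\in\mathcal{P}_2^{AB,(0,\kappa)}}\ \big(\langle A_0B_0\rangle+\langle A_0B_1\rangle+\langle A_1B_0\rangle-\langle A_1B_1\rangle\big)=2+2\kappa,$$ where $\langle A_xB_y\rangle=\sum_{a,b\in\{0,1\}}(-1)^{a+b}p(ab|xy)$.
   Context: $\mathcal{P}_2^{AB,(\epsilon_A,\epsilon_B)}$ is the set of all conditional distributions $p(ab|xy)$ for which there exist a probability space $(\Lambda,q)$ and distributions $p_A(\cdot|x,y,\lambda)$, $p_B(\cdot|x,y,\lambda)$ on $\{0,1\}$ with $p(ab|xy)=\int q(d\lambda)p_A(a|xy\lambda)p_B(b|xy\lambda)$, $\frac12\sum_a|p_A(a|xy\lambda)-p_A(a|xy'\lambda)|\le\epsilon_A$ for all $x,y,y',\lambda$, and $\frac12\sum_b|p_B(b|xy\lambda)-p_B(b|x'y\lambda)|\le\epsilon_B$ for all $y,x,x',\lambda$. With $\epsilon_A=0,\epsilon_B=\kappa$ this models leakage of Alice's input to Bob's outcome only. *)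

(* Defs.v *)
From HB Require Import structures.
From mathcomp Require Import all_boot all_order all_algebra.
From mathcomp Require Import all_classical all_reals all_analysis.
Set Implicit Arguments. Unset Strict Implicit. Unset Printing Implicit Defensive.
Import Order.TTheory GRing.Theory Num.Theory.
Local Open Scope ring_scope.

(* Inputs/outputs in {0,1} are encoded by bool: false = 0, true = 1. *)
Definition bsign (R : ringType) (b : bool) : R := if b then -1 else 1.

(* A conditional distribution p(ab|xy) is a function  p a b x y. *)
Definition behaviour (R : realType) := bool -> bool -> bool -> bool -> R.

Definition is_distr (R : realType) (f : bool -> R) : Prop :=
  (forall a, 0 <= f a) /\ f false + f true = 1.

Definition tvd (R : realType) (f g : bool -> R) : R :=
  2^-1 * (`|f false - g false| + `|f true - g true|).

(* The set P_2^{AB,(eA,eB)}: there exist a probability space (Lambda, q)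
   and (measurable in lambda) local response distributions
   pA(a|x y lambda) = pA x y lambda a, pB(b|x y lambda) = pB x y lambda b,
   with p(ab|xy) = int q(dl) pA(a|xyl) pB(b|xyl) and the relaxed
   no-signalling constraints. *)
Definition in_P2 (R : realType) (eA eB : R) (p : behaviour R) : Prop :=
  exists (d : measure_display) (T : measurableType d) (q : probability T R)
         (pA pB : bool -> bool -> T -> bool -> R),
    (forall x y a, measurable_fun setT (fun l => pA x y l a)) /\
    (forall x y b, measurable_fun setT (fun l => pB x y l b)) /\
    (forall x y l, is_distr (pA x y l)) /\
    (forall x y l, is_distr (pB x y l)) /\
    (forall a b x y,
        (\int[q]_l (pA x y l a * pB x y l b)%:E)%E = (p a b x y)%:E) /\
    (forall x y y' l, tvd (pA x y l) (pA x y' l) <= eA) /\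
    (forall y x x' l, tvd (pB x y l) (pB x' y l) <= eB).

Definition correlator (R : realType) (p : behaviour R) (x y : bool) : R :=
  \sum_(a : bool) \sum_(b : bool) bsign R a * bsign R b * p a b x y.

Definition chsh (R : realType) (p : behaviour R) : R :=
  correlator p false false + correlator p false true
  + correlator p true false - correlator p true true.

(* Main.v *)
Require Import Defs.
From HB Require Import structures.
From mathcomp Require Import all_boot all_order all_algebra.
From mathcomp Require Import all_classical all_reals all_analysis.
From mathcomp Require Import measurable_realfun ring lra.
Import Order.TTheory GRing.Theory Num.Theory.
Local Open Scope ring_scope.

Lemma tvdE (R : realType) (f g : bool -> R) : is_distr f -> is_distr g ->
  tvd f g = `|f false - g false|.
Proof.
move=> [_ hf] [_ hg]; rewrite /tvd.
have -> : f true - g true = - (f false - g false) by lra.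
rewrite normrN; by field.
Qed.

Lemma pw (R : realType) (k a0 a1 b00 b01 b10 b11 : R) :
  0 <= a0 <= 1 -> 0 <= a1 <= 1 -> 0 <= b00 <= 1 -> 0 <= b01 <= 1 ->
  0 <= b10 <= 1 -> 0 <= b11 <= 1 ->
  `|b00 - b10| <= k -> `|b01 - b11| <= k ->
  (2*a0-1)*(2*b00-1) + (2*a0-1)*(2*b01-1) + (2*a1-1)*(2*b10-1)
    - (2*a1-1)*(2*b11-1) <= 2 + 2 * k.
Proof.
move=> /andP[ha0 ha0'] /andP[ha1 ha1'] /andP[h1 h1'] /andP[h2 h2']
  /andP[h3 h3'] /andP[h4 h4'] hk1 hk2.
set X := (2*b00-1) + (2*b01-1).
set Y := (2*b10-1) - (2*b11-1).
have -> : (2*a0-1)*(2*b00-1) + (2*a0-1)*(2*b01-1) + (2*a1-1)*(2*b10-1)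
    - (2*a1-1)*(2*b11-1) = (2*a0-1)*X + (2*a1-1)*Y by rewrite /X /Y; ring.
have HA : forall a Z : R, 0 <= a <= 1 -> (2*a-1)*Z <= `|Z|.
  move=> a Z /andP[h h']; apply: le_trans (ler_norm _) _.
  rewrite normrM; apply: ler_piMl => //.
  have [hh|hh] := lerP 0 (2*a-1).
    by rewrite ger0_norm //; lra.
  by rewrite ltr0_norm //; lra.
have e1 := HA a0 X ltac:(lra). have e2 := HA a1 Y ltac:(lra).
suff : `|X| + `|Y| <= 2 + 2 * k by lra.
move: hk1 hk2; rewrite /X /Y.
have [q1|q1] := lerP 0 (b00 - b10);
  [rewrite (ger0_norm q1) | rewrite (ltr0_norm q1)];
have [q2|q2] := lerP 0 (b01 - b11);
  [rewrite (ger0_norm q2) | rewrite (ltr0_norm q2)|rewrite (ger0_norm q2) | rewrite (ltr0_norm q2)];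
have [q3|q3] := lerP 0 (2 * b00 - 1 + (2 * b01 - 1));
  rewrite ?(ger0_norm q3) ?(ltr0_norm q3);
have [q4|q4] := lerP 0 (2 * b10 - 1 - (2 * b11 - 1));
  rewrite ?(ger0_norm q4) ?(ltr0_norm q4); lra.
Qed.

Lemma upper (R : realType) (kappa : R) (p : behaviour R) :
  in_P2 0 kappa p -> chsh p <= 2 + 2 * kappa.
Proof.
move=> [d [T [q [pA [pB [mA [mB [dA [dB [hp [tA tB]]]]]]]]]]].
have intb : forall f : T -> R, measurable_fun setT f ->
    (forall l, `|f l| <= 4) -> q.-integrable setT (EFin \o f).
  move=> f mf bf.
  apply: (@le_integrable _ _ _ q setT measurableT _ (EFin \o cst 4)).
  - exact/measurable_EFinP.
  - by move=> l _ /=; rewrite lee_fin (ger0_norm (_ : (0:R) <= 4)) //.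
  - exact: finite_measure_integrable_cst.
have bA : forall x y l a, 0 <= pA x y l a <= 1.
  move=> x y l a; have [h1 h2] := dA x y l; have := h1 false; have := h1 true.
  by case: a => ? ?; apply/andP; split => //; lra.
have bB : forall x y l b, 0 <= pB x y l b <= 1.
  move=> x y l b; have [h1 h2] := dB x y l; have := h1 false; have := h1 true.
  by case: b => ? ?; apply/andP; split => //; lra.
have pE : forall a b x y, p a b x y = \int[q]_l (pA x y l a * pB x y l b).
  by move=> a b x y; rewrite /Rintegral hp.
have mP : forall x y a b, measurable_fun setT (fun l => pA x y l a * pB x y l b).
  by move=> x y a b; apply: measurable_funM.
have iP : forall x y a b, q.-integrable setT (EFin \o (fun l => pA x y l a * pB x y l b)).
  move=> x y a b; apply: intb => // l.
  have := bA x y l a; have := bB x y l b => /andP[? ?] /andP[? ?].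
  rewrite ger0_norm; [|exact: mulr_ge0]. nra.
have nb : forall z : R, -4 <= z <= 4 -> `|z| <= 4.
  by move=> z /andP[h1 h2]; rewrite ler_norml h1 h2.
have prb : forall x y l a b, 0 <= pA x y l a * pB x y l b <= 1.
  move=> x y l a b; have := bA x y l a; have := bB x y l b => /andP[? ?] /andP[? ?].
  apply/andP; split; [exact: mulr_ge0|nra].
pose E x y l := (pA x y l false - pA x y l true) * (pB x y l false - pB x y l true).
have mE : forall x y, measurable_fun setT (E x y).
  by move=> x y; apply: measurable_funM; apply: measurable_funB.
have corr : forall x y, correlator p x y = \int[q]_l E x y l.
  move=> x y.
  rewrite (@eq_Rintegral _ _ _ q setT (fun l =>
     ((pA x y l false * pB x y l false - pA x y l false * pB x y l true)
      - pA x y l true * pB x y l false) + pA x y l true * pB x y l true)); last first.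
    by move=> l _; rewrite /E; ring.
  have i1 : q.-integrable setT (EFin \o (fun l => pA x y l false * pB x y l false - pA x y l false * pB x y l true)).
    apply: intb; first by apply: measurable_funB; apply: mP.
    move=> l; apply: nb; have := prb x y l false false; have := prb x y l false true; lra.
  have i2 : q.-integrable setT (EFin \o (fun l => (pA x y l false * pB x y l false - pA x y l false * pB x y l true) - pA x y l true * pB x y l false)).
    apply: intb.
      by apply: measurable_funB; [apply: measurable_funB|]; apply: mP.
    move=> l; apply: nb; have := prb x y l false false; have := prb x y l false true;
      have := prb x y l true false; lra.
  rewrite RintegralD // RintegralB // RintegralB //.
  rewrite -!pE /correlator !big_bool /bsign /=; ring.
have bE : forall x y l, -1 <= E x y l <= 1.
  move=> x y l; rewrite /E.
  have := bA x y l false; have := bA x y l true; have := bB x y l false; have := bB x y l true.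
  move=> /andP[? ?] /andP[? ?] /andP[? ?] /andP[? ?]; apply/andP; split; nra.
have iE : forall x y, q.-integrable setT (EFin \o E x y).
  by move=> x y; apply: intb => // l; apply: nb; have := bE x y l; lra.
have j1 : q.-integrable setT (EFin \o (fun l => E false false l + E false true l)).
  apply: intb; first by apply: measurable_funD; apply: mE.
  move=> l; apply: nb; have := bE false false l; have := bE false true l;
    lra.
have j2 : q.-integrable setT (EFin \o (fun l => E false false l + E false true l + E true false l)).
  apply: intb.
    by apply: measurable_funD; [apply: measurable_funD|]; apply: mE.
  move=> l; apply: nb; have := bE false false l; have := bE false true l;
    have := bE true false l; lra.
have -> : chsh p = \int[q]_l (E false false l + E false true l + E true false l - E true true l).
  by rewrite RintegralB // RintegralD // RintegralD // /chsh !corr.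
have iF : q.-integrable setT (EFin \o (fun l => E false false l + E false true l + E true false l - E true true l)).
  apply: intb.
    by apply: measurable_funB; [apply: measurable_funD; [apply: measurable_funD|]|]; apply: mE.
  move=> l; apply: nb; have := bE false false l; have := bE false true l;
    have := bE true false l; have := bE true true l; lra.
apply: (@le_trans _ _ (\int[q]_l (2 + 2 * kappa))); last first.
  rewrite Rintegral_cst //. have h1 := probability_setT q.
  rewrite le_eqVlt; apply/orP; left; apply/eqP; rewrite -[RHS]mulr1; congr (_ * _); exact: (congr1 fine h1).
apply: le_Rintegral => //; first exact: finite_measure_integrable_cst.
move=> l _.
have dtA : forall x y, pA x y l true = 1 - pA x y l false.
  by move=> x y; have [_ h] := dA x y l; lra.
have dtB : forall x y, pB x y l true = 1 - pB x y l false.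
  by move=> x y; have [_ h] := dB x y l; lra.
have eqA : forall x, pA x true l false = pA x false l false.
  move=> x; have := tA x false true l; rewrite tvdE //.
  by rewrite normr_le0 subr_eq0 => /eqP.
have k1 := tB false false true l; rewrite tvdE // in k1.
have k2 := tB true false true l; rewrite tvdE // in k2.
have H := @pw R kappa _ _ _ _ _ _ (bA false false l false) (bA true false l false)
  (bB false false l false) (bB false true l false)
  (bB true false l false) (bB true true l false) k1 k2.
rewrite /E !dtA !dtB !eqA; lra.
Qed.

Lemma exist_part (R : realType) (kappa : R) (hk0 : 0 <= kappa) (hk1 : kappa < 1) :
  (exists p : behaviour R, in_P2 0 kappa p /\ chsh p = 2 + 2 * kappa).
Proof.
pose pA : bool -> bool -> R -> bool -> R := fun x y l a => if a then 0 else 1.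
pose pB : bool -> bool -> R -> bool -> R := fun x y l b =>
  if x && y then (if b then kappa else 1 - kappa) else (if b then 0 else 1).
exists (fun a b x y => pA x y 0 a * pB x y 0 b); split; last first.
  rewrite /chsh /correlator !big_bool /= /bsign /pA /pB /=. lra.
exists _, R, (dirac (0:R) : probability R R), pA, pB.
split; first by move=> x y a; exact: measurable_cst.
split; first by move=> x y a; exact: measurable_cst.
split; first by move=> x y l; split; [case=> /=|]; rewrite /pA /=; lra.
split; first by move=> x y l; split; [case=> /=|]; rewrite /pB /=; case: (x && y) => /=; lra.
split.
  move=> a b x y.
  have := @integral_cst _ R R (dirac (0:R) : probability R R) setT measurableT (pA x y 0%R a * pB x y 0%R b)%:E.
  rewrite /= diracT mule1 => H; apply: etrans H.
  by apply: eq_integral => l _.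
split.
  by move=> x y y' l; rewrite /tvd /pA /= !subrr normr0 addr0 mulr0.
have key : forall u v : R, `|u| = kappa -> `|v| = kappa -> 2^-1 * (`|u| + `|v|) <= kappa.
  by move=> u v -> ->; lra.
move=> y x x' l; rewrite /tvd /pB.
case: x; case: x'; case: y => /=; rewrite ?subrr ?normr0 ?addr0 ?mulr0 //.
- apply: key; last by rewrite subr0 ger0_norm.
  by rewrite addrAC subrr sub0r normrN ger0_norm.
- apply: key; last by rewrite sub0r normrN ger0_norm.
  by rewrite opprB addrC subrK ger0_norm.
Qed.

Theorem mainTheorem9 (R : realType) (kappa : R) (hk0 : 0 <= kappa) (hk1 : kappa < 1) :
  (forall p : behaviour R, in_P2 0 kappa p -> chsh p <= 2 + 2 * kappa) /\
  (exists p : behaviour R, in_P2 0 kappa p /\ chsh p = 2 + 2 * kappa).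
Proof.
split; [exact: upper | exact: exist_part].
Qed.
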